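(* Let $G$ be a long graph. Then $i(G)=\gamma(G)$.
   Context: All graphs are finite and simple. A graph $G$ is long if the set $\{x\in V(G):\deg(x)>2\}$ is independent. A set $A\subseteq V(G)$ is dominating if every vertex not in $A$ has a neighbor in $A$; $\gamma(G)$ is the minimum size of a dominating set and $i(G)$ the minimum size of an independent dominating set. *)

(* Defs.v *)
From mathcomp Require Import all_boot.
Set Implicit Arguments. Unset Strict Implicit. Unset Printing Implicit Defensive.

(* A finite simple graph: vertex type T : finType, adjacency e : rel T,
   required (in the theorem) to be symmetric and irreflexive. *)

Definition nbhd (T : finType) (e : rel T) (x : T) : {set T} := [set y | e x y].
Definition deg (T : finType) (e : rel T) (x : T) : nat := #|nbhd e x|.

Definition independent (T : finType) (e : rel T) (A : {set T}) : bool :=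
  [forall x in A, forall y in A, ~~ e x y].

Definition dominating (T : finType) (e : rel T) (A : {set T}) : bool :=
  [forall x, (x \in A) || [exists y in A, e x y]].

Definition long_graph (T : finType) (e : rel T) : bool :=
  independent e [set x | 2 < deg e x].

(* gamma(G): minimum size of a dominating set (setT is dominating, so the
   default #|T| is never strictly below the true minimum). *)
Definition domination_number (T : finType) (e : rel T) : nat :=
  \big[minn/#|T|]_(A : {set T} | dominating e A) #|A|.

(* i(G): minimum size of an independent dominating set (a maximal independent
   set always exists and has size <= #|T|). *)
Definition indep_domination_number (T : finType) (e : rel T) : nat :=
  \big[minn/#|T|]_(A : {set T} | independent e A && dominating e A) #|A|.

(* Main.v *)
Require Import Defs.
From mathcomp Require Import all_boot.
From mathcomp Require Import zify.
Set Implicit Arguments. Unset Strict Implicit. Unset Printing Implicit Defensive.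

Definition edges (T : finType) (e : rel T) (D : {set T}) : {set T * T} :=
  [set p : T * T | (p.1 \in D) && (p.2 \in D) && e p.1 p.2].

Lemma step (T : finType) (e : rel T) (e_sym : symmetric e) (e_irr : irreflexive e)
  (D : {set T}) (u v : T) :
  dominating e D -> u \in D -> v \in D -> e u v -> deg e u <= 2 ->
  exists D' : {set T}, [/\ dominating e D', #|D'| <= #|D| &
                          #|edges e D'| < #|edges e D|].
Proof.
move=> domD uD vD euv degu.
have vu : v != u by apply/eqP => vu; rewrite vu e_irr in euv.
case: (boolP (dominating e (D :\ u))) => Hd.
  exists (D :\ u); split => //.
    by apply: subset_leq_card; apply: subsetDl.
  apply: proper_card; apply/properP; split.
    apply/subsetP => -[a b]; rewrite !inE /= => /andP[/andP[/andP[_ aD] /andP[_ bD]] eab].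
    by rewrite aD bD.
  exists (u, v); first by rewrite inE /= uD vD euv.
  by rewrite inE /= !inE eqxx.
move/forallPn: Hd => [x]; rewrite negb_or => /andP[xnD' /existsPn noadj].
have xu : x != u.
  apply/eqP => xu; move: (noadj v); rewrite xu !inE vu vD euv //.
have xnD : x \notin D by move: xnD'; rewrite !inE xu.
have exu : e x u.
  move/forallP: domD => /(_ x); rewrite (negbTE xnD) /= => /existsP[y /andP[yD exy]].
  case: (eqVneq y u) => [<- //|yu].
  by move: (noadj y); rewrite !inE yu yD exy.
exists (x |: (D :\ u)); split.
- apply/forallP => y.
  case: (eqVneq y x) => [->|yx]; first by rewrite !inE eqxx.
  case: (eqVneq y u) => [->|yu].
    apply/orP; right; apply/existsP; exists v; by rewrite !inE vu vD euv orbT.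
  case: (boolP (y \in D)) => yD; first by rewrite !inE yu yD orbT.
  move/forallP: domD => /(_ y); rewrite (negbTE yD) /= => /existsP[z /andP[zD eyz]].
  case: (eqVneq z u) => [zu|zu].
    exfalso.
    have sub : v |: (x |: [set y]) \subset nbhd e u.
      apply/subsetP => a; rewrite !inE => /or3P[] /eqP->.
      - by [].
      - by rewrite e_sym.
      - by rewrite e_sym -zu.
    move: (subset_leq_card sub); rewrite /deg in degu.
    rewrite !cardsU1 cards1 !inE.
    idtac.
    have vx : v != x by apply/eqP => vx; rewrite -vx vD in xnD.
    have vy : v != y by apply/eqP => vy; rewrite -vy vD in yD.
    rewrite (negbTE vx) (negbTE vy) eq_sym (negbTE yx) /= => H.
    by move: (leq_trans H degu).
  apply/orP; right; apply/existsP; exists z; by rewrite !inE zu zD eyz orbT.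
- rewrite cardsU1 (cardsD1 u D) uD.
  case: (x \notin D :\ u); simpl; lia.
- apply: proper_card; apply/properP; split.
    apply/subsetP => -[a b]; rewrite !inE /=.
    case: (eqVneq a x) => [->|ax] /=.
      move=> /andP[bD exb]; exfalso.
      case/orP: bD => [/eqP bx|/andP[bu bD]]; first by rewrite bx e_irr in exb.
      by move: (noadj b); rewrite !inE bu bD exb.
    case: (eqVneq b x) => [->|bx] /=.
      move=> /andP[/andP[/andP[au aD] _] eax]; exfalso.
      by move: (noadj a); rewrite !inE au aD e_sym eax.
    by move=> /andP[/andP[/andP[_ aD] /andP[_ bD]] eab]; rewrite aD bD.
  exists (u, v); first by rewrite inE /= uD vD euv.
  by rewrite !inE /= eqxx eq_sym (negbTE xu).
Qed.

Lemma step2 (T : finType) (e : rel T) (e_sym : symmetric e) (e_irr : irreflexive e)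
  (D : {set T}) : long_graph e -> dominating e D -> ~~ independent e D ->
  exists D' : {set T}, [/\ dominating e D', #|D'| <= #|D| &
                          #|edges e D'| < #|edges e D|].
Proof.
move=> lg domD /forallPn[u]; rewrite negb_imply => /andP[uD /forallPn[v]].
rewrite negb_imply negbK => /andP[vD euv].
case: (leqP (deg e u) 2) => du; first exact: (step e_sym e_irr domD uD vD euv du).
case: (leqP (deg e v) 2) => dv.
  by apply: (step e_sym e_irr domD vD uD _ dv); rewrite e_sym.
move/forallP: lg => /(_ u); rewrite inE du /= => /forallP /(_ v).
by rewrite inE dv euv.
Qed.

Lemma improve (T : finType) (e : rel T) (e_sym : symmetric e) (e_irr : irreflexive e)
  (lg : long_graph e) (n : nat) : forall D : {set T},
  #|edges e D| <= n -> dominating e D ->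
  exists I : {set T}, [/\ independent e I, dominating e I & #|I| <= #|D|].
Proof.
elim: n => [|n IH] D hn domD;
  (case: (boolP (independent e D)) => ind; first by exists D);
  have [D' [domD' cD' eD']] := step2 e_sym e_irr lg domD ind.
  by move: (leq_trans eD' hn).
have [I [iI dI cI]] := IH D' (leq_trans (leq_trans eD' hn) (leqnn _)) domD'.
by exists I; split => //; apply: leq_trans cD'.
Qed.

Lemma bigmin_le (T : finType) (P : pred {set T}) (A : {set T}) :
  P A -> \big[minn/#|T|]_(B : {set T} | P B) #|B| <= #|A|.
Proof.
move=> PA; have : A \in index_enum {set T} by rewrite mem_index_enum.
elim: (index_enum {set T}) => [|B r IH] //; rewrite big_cons inE.
case/orP => [/eqP <-|Ar]; first by rewrite PA geq_minl.
case: (P B); last exact: IH.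
by rewrite geq_min IH ?orbT.
Qed.

Lemma le_bigmin (T : finType) (P : pred {set T}) (n : nat) :
  n <= #|T| -> (forall A : {set T}, P A -> n <= #|A|) ->
  n <= \big[minn/#|T|]_(B : {set T} | P B) #|B|.
Proof.
move=> hT hA; apply: (big_ind (fun m => n <= m)) => //.
  by move=> x y hx hy; rewrite leq_min hx hy.
Qed.

Lemma bigmin_leT (T : finType) (P : pred {set T}) :
  \big[minn/#|T|]_(B : {set T} | P B) #|B| <= #|T|.
Proof.
apply: (big_ind (fun m => m <= #|T|)) => //.
  by move=> x y hx _; rewrite geq_min hx.
by move=> B _; apply: max_card.
Qed.

Theorem theorem5p12 (T : finType) (e : rel T)
  (e_sym : symmetric e) (e_irr : irreflexive e) :
  long_graph e -> indep_domination_number e = domination_number e.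
Proof.
move=> lg; apply/eqP; rewrite eqn_leq; apply/andP; split.
  apply: le_bigmin; first exact: bigmin_leT.
  move=> D domD.
  have [I [iI dI cI]] := improve e_sym e_irr lg (leqnn _) domD.
  apply: leq_trans cI; apply: bigmin_le; by rewrite iI dI.
apply: le_bigmin; first exact: bigmin_leT.
move=> I /andP[_ dI]; exact: bigmin_le.
Qed.
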